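(* Let $a>0$, $\phi\in\mathcal D_+[0,\infty)$, and let $C^\phi$ and the times $\sigma_k,\tau_k$ be as in the context. For every $k\ge1$ and every $t\in[\sigma_{k-1},\tau_k)$, $$C^\phi(t)=\sup_{s\in[\sigma_{k-1},t]}(\phi(s)-a)^+.$$
   Context: $\mathcal D_+[0,\infty)$ is the set of nonnegative right-continuous functions $[0,\infty)\to\mathbb R$ with left limits. $x^+=\max(x,0)$, $\wedge=\min$. For $a>0$, $C^\phi(t)=\sup_{s\in[0,t]}\big[(\phi(s)-a)^+\wedge\inf_{u\in[s,t]}\phi(u)\big]$. Times: $\tau_0=0$, $\sigma_0=\min\{t\ge0:\phi(t)-a\ge0\}$, and for $k\ge1$, $\tau_k=\min\{t\ge\sigma_{k-1}:\phi(t)\le\sup_{s\in[\sigma_{k-1},t]}\phi(s)-a\}$, $\sigma_k=\min\{t\ge\tau_k:\phi(t)-a\ge\inf_{u\in[\tau_k,t]}\phi(u)\}$, with $\min\emptyset=+\infty$ (minima are attained when finite, by right-continuity). *)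

(* Defs.v *)
From Stdlib Require Import Reals Lra ClassicalEpsilon.
Open Scope R_scope.

(* phi in D_+[0,oo): nonnegative, right-continuous with left limits on [0,oo).
   phi is given as a total function R -> R; only its values on [0,oo) matter. *)
Definition cadlag_nonneg (phi : R -> R) : Prop :=
  (forall t, 0 <= t -> 0 <= phi t) /\
  (forall t, 0 <= t -> forall eps, 0 < eps ->
     exists d, 0 < d /\ forall s, t <= s < t + d -> Rabs (phi s - phi t) < eps) /\
  (forall t, 0 < t -> exists l, forall eps, 0 < eps ->
     exists d, 0 < d /\ forall s, t - d < s < t -> Rabs (phi s - l) < eps).

Definition is_glb (E : R -> Prop) (m : R) : Prop :=
  (forall x, E x -> m <= x) /\ (forall b, (forall x, E x -> b <= x) -> b <= m).

Definition Rsup (E : R -> Prop) : R := epsilon (inhabits 0) (fun x => is_lub E x).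
Definition Rinf (E : R -> Prop) : R := epsilon (inhabits 0) (fun x => is_glb E x).

Definition sup_on (l t : R) (f : R -> R) : R :=
  Rsup (fun y => exists s, l <= s <= t /\ y = f s).
Definition inf_on (l t : R) (f : R -> R) : R :=
  Rinf (fun y => exists s, l <= s <= t /\ y = f s).

Definition posp (x : R) : R := Rmax x 0.

Definition Cphi (a : R) (phi : R -> R) (t : R) : R :=
  sup_on 0 t (fun s => Rmin (posp (phi s - a)) (inf_on s t phi)).

(* Extended times in [0,+oo]: None stands for +oo.
   first_time l P = min {t >= l | P t}  (min of empty set = +oo); the minimum is
   attained by right-continuity, so it coincides with the infimum used here. *)
Definition first_time (l : R) (P : R -> Prop) : option R :=
  match excluded_middle_informative (exists t, l <= t /\ P t) with
  | left _ => Some (Rinf (fun t => l <= t /\ P t))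
  | right _ => None
  end.

Definition sigma0 (a : R) (phi : R -> R) : option R :=
  first_time 0 (fun t => phi t - a >= 0).

Definition tau_next (a : R) (phi : R -> R) (sig : option R) : option R :=
  match sig with
  | None => None
  | Some s => first_time s (fun t => phi t <= sup_on s t phi - a)
  end.

Definition sigma_next (a : R) (phi : R -> R) (tau : option R) : option R :=
  match tau with
  | None => None
  | Some s => first_time s (fun t => phi t - a >= inf_on s t phi)
  end.

Fixpoint sigma_k (a : R) (phi : R -> R) (k : nat) : option R :=
  match k with
  | O => sigma0 a phi
  | S k' => sigma_next a phi (tau_next a phi (sigma_k a phi k'))
  end.

Definition tau_k (a : R) (phi : R -> R) (k : nat) : option R :=
  match k with
  | O => Some 0
  | S k' => tau_next a phi (sigma_k a phi k')
  end.

Definition lt_ext (t : R) (tau : option R) : Prop :=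
  match tau with None => True | Some x => t < x end.

(* Main.v *)
Require Import Defs.
From Stdlib Require Import Reals Lra Lia Classical ClassicalEpsilon.
Open Scope R_scope.

Lemma Rsup_spec E : (exists x, E x) -> bound E -> is_lub E (Rsup E).
Proof.
  intros H H0. unfold Rsup. apply epsilon_spec.
  destruct (completeness E H0 H) as [x Hx]. exists x; auto.
Qed.

Lemma Rinf_spec E : (exists x, E x) -> (exists b, forall x, E x -> b <= x) ->
  is_glb E (Rinf E).
Proof.
  intros [x0 Hx0] [b Hb]. unfold Rinf. apply epsilon_spec.
  set (F := fun y => E (- y)).
  assert (bound F) by (exists (-b); intros y Fy; specialize (Hb _ Fy); lra).
  assert (exists y, F y) by (exists (-x0); unfold F; rewrite Ropp_involutive; auto).
  destruct (completeness F H H0) as [m [Hm1 Hm2]].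
  exists (-m). split.
  - intros x Ex. assert (F (-x)) by (unfold F; rewrite Ropp_involutive; auto).
    specialize (Hm1 _ H1). lra.
  - intros c Hc. assert (m <= -c). { apply Hm2. intros y Fy. specialize (Hc _ Fy). lra. }
    lra.
Qed.

Lemma sup_on_spec l t f : l <= t -> (exists M, forall s, l <= s <= t -> f s <= M) ->
  is_lub (fun y => exists s, l <= s <= t /\ y = f s) (sup_on l t f).
Proof.
  intros Hlt [M HM]. unfold sup_on. apply Rsup_spec.
  - exists (f l); exists l; split; [lra|auto].
  - exists M. intros y [s [Hs ->]]. auto.
Qed.

Lemma sup_ub l t f s : (exists M, forall s, l <= s <= t -> f s <= M) -> l <= s <= t ->
  f s <= sup_on l t f.
Proof.
  intros HM Hs. apply (proj1 (sup_on_spec l t f ltac:(lra) HM)). exists s; auto.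
Qed.

Lemma sup_least l t f b : l <= t -> (exists M, forall s, l <= s <= t -> f s <= M) ->
  (forall s, l <= s <= t -> f s <= b) -> sup_on l t f <= b.
Proof.
  intros Hlt HM Hb. apply (proj2 (sup_on_spec l t f Hlt HM)).
  intros y [s [Hs ->]]. auto.
Qed.

Lemma inf_spec phi l t : (forall v, 0 <= v -> 0 <= phi v) -> 0 <= l -> l <= t ->
  is_glb (fun y => exists s, l <= s <= t /\ y = phi s) (inf_on l t phi).
Proof.
  intros Hnn Hl Hlt. unfold inf_on. apply Rinf_spec.
  - exists (phi l); exists l; split; [lra|auto].
  - exists 0. intros y [s [Hs ->]]. apply Hnn; lra.
Qed.

Lemma inf_lb phi l t s : (forall v, 0 <= v -> 0 <= phi v) -> 0 <= l -> l <= s <= t ->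
  inf_on l t phi <= phi s.
Proof.
  intros Hnn Hl Hs. apply (proj1 (inf_spec phi l t Hnn Hl ltac:(lra))). exists s; auto.
Qed.

Lemma inf_glb phi l t b : (forall v, 0 <= v -> 0 <= phi v) -> 0 <= l -> l <= t ->
  (forall s, l <= s <= t -> b <= phi s) -> b <= inf_on l t phi.
Proof.
  intros Hnn Hl Hlt Hb. apply (proj2 (inf_spec phi l t Hnn Hl Hlt)).
  intros y [s [Hs ->]]. auto.
Qed.

Lemma ft_some l P x : first_time l P = Some x ->
  l <= x /\ (forall u, l <= u -> P u -> x <= u) /\
  (forall e, x < e -> exists u, l <= u /\ P u /\ u < e).
Proof.
  unfold first_time. destruct excluded_middle_informative as [Hex|]; [|discriminate].
  intros H; injection H as <-.
  assert (G : is_glb (fun t => l <= t /\ P t) (Rinf (fun t => l <= t /\ P t))).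
  { apply Rinf_spec. destruct Hex as [u Hu]; exists u; auto.
    exists l; intros ? [? _]; auto. }
  destruct G as [G1 G2]. split; [|split].
  - apply G2; intros ? [? _]; auto.
  - intros; apply G1; auto.
  - intros e He. destruct (classic (exists u, l <= u /\ P u /\ u < e)) as [|Hn]; auto.
    exfalso.
    assert (e <= Rinf (fun t => l <= t /\ P t)).
    { apply G2. intros u [Hu1 Hu2]. destruct (Rlt_dec u e) as [Hr|Hr].
      - exfalso; apply Hn; eauto.
      - lra. }
    lra.
Qed.

Lemma ft_none l P : first_time l P = None -> forall u, l <= u -> ~ P u.
Proof.
  unfold first_time. destruct excluded_middle_informative as [|Hn]; [discriminate|].
  intros _ u Hu Pu. apply Hn; eauto.
Qed.

Lemma sigma_nonneg a phi j s : sigma_k a phi j = Some s -> 0 <= s.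
Proof.
  revert s. induction j as [|j IH]; intros s H.
  - simpl in H. unfold sigma0 in H. apply ft_some in H. lra.
  - simpl in H. unfold sigma_next, tau_next in H.
    destruct (sigma_k a phi j) as [s'|] eqn:E; [|discriminate].
    destruct (first_time s' _) as [tau|] eqn:E2; [|discriminate].
    apply ft_some in H. apply ft_some in E2. specialize (IH s' eq_refl). lra.
Qed.

Lemma phi_bdd phi l t : cadlag_nonneg phi -> 0 <= l -> l <= t ->
  exists M, forall s, l <= s <= t -> phi s <= M.
Proof.
  intros [Hnn [Hrc Hll]] Hl Hlt.
  set (E := fun x => l <= x <= t /\ exists M, forall s, l <= s <= x -> phi s <= M).
  assert (HE : E l).
  { split. lra. exists (phi l). intros s Hs; replace s with l by lra; lra. }
  assert (Hb : bound E) by (exists t; intros x [? _]; lra).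
  destruct (completeness E Hb (ex_intro _ l HE)) as [c [Hub Hlub]].
  assert (Hlc : l <= c) by (apply Hub; auto).
  assert (Hct : c <= t) by (apply Hlub; intros x [? _]; lra).
  destruct (Hrc c ltac:(lra) 1 ltac:(lra)) as [d2 [Hd2 Hrc2]].
  assert (Hleft : exists M, forall s, l <= s < c -> phi s <= M).
  { destruct (Req_dec c l) as [Ec|Nc].
    - exists 0. intros; lra.
    - destruct (Hll c ltac:(lra)) as [L HL]. destruct (HL 1 ltac:(lra)) as [d1 [Hd1 HL1]].
      assert (Hx : exists x, E x /\ Rmax l (c - d1) < x).
      { destruct (classic (exists x, E x /\ Rmax l (c - d1) < x)) as [|Hn]; auto.
        exfalso. assert (c <= Rmax l (c - d1)).
        { apply Hlub. intros x Ex. destruct (Rle_dec x (Rmax l (c - d1))); auto.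
          exfalso; apply Hn; exists x; split; auto; lra. }
        unfold Rmax in H; destruct Rle_dec in H; lra. }
      destruct Hx as [x [[Hx1 [M HM]] Hx2]].
      exists (Rmax M (L + 1)). intros s Hs. destruct (Rle_dec s x).
      + apply Rle_trans with M. apply HM; lra. apply Rmax_l.
      + assert (c - d1 < s) by (unfold Rmax in Hx2; destruct Rle_dec in Hx2; lra).
        specialize (HL1 s ltac:(lra)). apply Rabs_def2 in HL1.
        apply Rle_trans with (L + 1); [lra | apply Rmax_r]. }
  destruct Hleft as [M1 HM1].
  assert (Hy : E (Rmin t (c + d2 / 2))).
  { split. unfold Rmin; destruct Rle_dec; lra.
    exists (Rmax M1 (phi c + 1)). intros s Hs. destruct (Rlt_dec s c).
    - apply Rle_trans with M1. apply HM1; lra. apply Rmax_l.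
    - assert (s < c + d2) by (unfold Rmin in Hs; destruct Rle_dec in Hs; lra).
      specialize (Hrc2 s ltac:(lra)). apply Rabs_def2 in Hrc2.
      apply Rle_trans with (phi c + 1); [lra | apply Rmax_r]. }
  assert (Rmin t (c + d2 / 2) <= c) by (apply Hub; auto).
  assert (Rmin t (c + d2 / 2) = t) by (unfold Rmin in *; destruct Rle_dec; lra).
  destruct Hy as [_ [M HM]]. exists M. intros s Hs. apply HM. lra.
Qed.

Lemma attain a phi tau s0 : 0 < a -> cadlag_nonneg phi -> 0 <= tau ->
  first_time tau (fun u => phi u - a >= inf_on tau u phi) = Some s0 ->
  phi s0 - a >= inf_on tau s0 phi.
Proof.
  intros Ha [Hnn [Hrc _]] Htau H. apply ft_some in H. destruct H as [H1 [H2 H3]].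
  set (m := inf_on tau s0 phi).
  destruct (Rge_dec (phi s0 - a) m) as [|Hlt]; auto. exfalso. apply Rnot_ge_lt in Hlt.
  set (eps := Rmin (m - (phi s0 - a)) a / 2).
  assert (Heps : 0 < eps /\ eps < m - (phi s0 - a) /\ 2 * eps <= a).
  { unfold eps, Rmin; destruct Rle_dec; lra. }
  destruct (Hrc s0 ltac:(lra) eps ltac:(lra)) as [d [Hd Hd2]].
  destruct (H3 (s0 + d) ltac:(lra)) as [u [Hu1 [Qu Hu2]]].
  assert (s0 <= u) by (apply H2; auto).
  assert (Hmu : Rmin m (phi s0 - eps) <= inf_on tau u phi).
  { apply inf_glb; auto; try lra. intros v Hv. destruct (Rle_dec v s0).
    - apply Rle_trans with m. apply Rmin_l. apply inf_lb; auto; lra.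
    - specialize (Hd2 v ltac:(lra)). apply Rabs_def2 in Hd2.
      apply Rle_trans with (phi s0 - eps). apply Rmin_r. lra. }
  specialize (Hd2 u ltac:(lra)). apply Rabs_def2 in Hd2.
  destruct (Rle_dec m (phi s0 - eps)).
  - rewrite Rmin_left in Hmu by lra. lra.
  - rewrite Rmin_right in Hmu by lra. lra.
Qed.

Lemma posp_ge x : x <= posp x. Proof. unfold posp; apply Rmax_l. Qed.
Lemma posp_nn x : 0 <= posp x. Proof. unfold posp; apply Rmax_r. Qed.
Lemma posp_le x b : x <= b -> 0 <= b -> posp x <= b.
Proof. intros; unfold posp, Rmax; destruct Rle_dec; lra. Qed.
Lemma posp_mono x y : x <= y -> posp x <= posp y.
Proof. intros; unfold posp, Rmax; destruct Rle_dec; destruct Rle_dec; lra. Qed.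

Theorem proposition3p2 (a : R) (phi : R -> R) (k : nat) (t s0 : R) :
  0 < a -> cadlag_nonneg phi -> (1 <= k)%nat ->
  sigma_k a phi (k - 1) = Some s0 -> s0 <= t -> lt_ext t (tau_k a phi k) ->
  Cphi a phi t = sup_on s0 t (fun s => posp (phi s - a)).
Proof.
  intros Ha Hphi Hk Hs0 Hs0t Htau.
  destruct k as [|k']; [lia|]. replace (S k' - 1)%nat with k' in Hs0 by lia.
  pose proof (sigma_nonneg _ _ _ _ Hs0) as Hs0pos.
  pose proof Hphi as [Hnn [Hrc Hll]].
  destruct (phi_bdd phi 0 t Hphi (Rle_refl 0) ltac:(lra)) as [M HM].
  assert (HM0 : 0 <= M) by (apply Rle_trans with (phi 0); [apply Hnn; lra | apply HM; lra]).
  assert (HP : forall u, s0 <= u <= t -> sup_on s0 u phi - a < phi u).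
  { intros u Hu. cbn [tau_k] in Htau. unfold tau_next in Htau. rewrite Hs0 in Htau.
    destruct (first_time s0 _) as [x|] eqn:E.
    - apply ft_some in E. destruct E as [_ [E _]].
      destruct (Rle_dec (phi u) (sup_on s0 u phi - a)) as [Hle|]; [|lra].
      specialize (E u ltac:(lra) Hle). simpl in Htau; lra.
    - pose proof (ft_none _ _ E u ltac:(lra)). simpl in H. lra. }
  set (h := fun s => posp (phi s - a)).
  assert (HhM : exists M', forall s, s0 <= s <= t -> h s <= M').
  { exists M. intros s Hs. unfold h. apply posp_le; auto. specialize (HM s ltac:(lra)). lra. }
  set (R0 := sup_on s0 t h).
  assert (HR : forall s, s0 <= s <= t -> h s <= R0).
  { intros s Hs. apply sup_ub; auto. }
  assert (Hs0R : h s0 <= R0) by (apply HR; lra).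
  unfold Cphi. fold h.
  set (g := fun s => Rmin (h s) (inf_on s t phi)).
  assert (HgM : exists M', forall s, 0 <= s <= t -> g s <= M').
  { exists M. intros s Hs. unfold g. apply Rle_trans with (h s). apply Rmin_l.
    unfold h. apply posp_le; auto. specialize (HM s ltac:(lra)). lra. }
  apply Rle_antisym.
  - apply sup_least; auto; try lra. intros s Hs.
    destruct (Rle_dec s0 s).
    + apply Rle_trans with (h s). apply Rmin_l. apply HR; lra.
    + destruct k' as [|j].
      * simpl in Hs0. unfold sigma0 in Hs0. apply ft_some in Hs0.
        destruct Hs0 as [_ [Hmin _]].
        assert (phi s < a).
        { destruct (Rlt_dec (phi s) a); auto. exfalso.
          specialize (Hmin s ltac:(lra) ltac:(lra)). lra. }
        apply Rle_trans with (h s). apply Rmin_l.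
        apply Rle_trans with 0. unfold h. apply posp_le; lra.
        apply Rle_trans with (h s0); auto. apply posp_nn.
      * cbn [sigma_k] in Hs0. unfold sigma_next in Hs0.
        destruct (tau_next a phi (sigma_k a phi j)) as [tau|] eqn:Et; [|discriminate].
        assert (Htau0 : 0 <= tau).
        { unfold tau_next in Et. destruct (sigma_k a phi j) as [s'|] eqn:Es; [|discriminate].
          apply sigma_nonneg in Es. apply ft_some in Et. lra. }
        pose proof (attain a phi tau s0 Ha Hphi Htau0 Hs0) as Hatt.
        apply ft_some in Hs0. destruct Hs0 as [Hts0 [Hmin _]].
        set (m := inf_on tau s0 phi) in *.
        assert (Hm0 : 0 <= m) by (apply inf_glb; auto; try lra; intros v Hv; apply Hnn; lra).
        assert (Hms0 : m <= h s0).
        { unfold h. apply Rle_trans with (phi s0 - a). lra. apply posp_ge. }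
        destruct (Rlt_dec s tau).
        -- apply Rle_trans with (inf_on s t phi). apply Rmin_r.
           apply Rle_trans with m; [|lra].
           apply inf_glb; auto; try lra. intros v Hv. apply inf_lb; auto; lra.
        -- assert (HQs : phi s - a < inf_on tau s phi).
           { destruct (Rlt_dec (phi s - a) (inf_on tau s phi)); auto. exfalso.
             specialize (Hmin s ltac:(lra) ltac:(lra)). lra. }
           set (I := inf_on s t phi).
           destruct (Rle_dec I (phi s0 - a)).
           ++ apply Rle_trans with I. apply Rmin_r.
              apply Rle_trans with (h s0); auto. unfold h.
              apply Rle_trans with (phi s0 - a); auto. apply posp_ge.
           ++ assert (Hmm : Rmin (inf_on tau s phi) I <= m).
              { apply inf_glb; auto; try lra. intros v Hv. destruct (Rle_dec v s).
                - apply Rle_trans with (inf_on tau s phi). apply Rmin_l. apply inf_lb; auto; lra.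
                - apply Rle_trans with I. apply Rmin_r. apply inf_lb; auto; lra. }
              assert (inf_on tau s phi <= m).
              { destruct (Rle_dec (inf_on tau s phi) I).
                - rewrite Rmin_left in Hmm; lra.
                - rewrite Rmin_right in Hmm; lra. }
              apply Rle_trans with (h s). apply Rmin_l.
              apply Rle_trans with (h s0); auto. unfold h. apply posp_mono. lra.
  - apply sup_least; auto. intros s Hs.
    assert (Hhg : h s <= g s).
    { unfold g. assert (h s <= inf_on s t phi).
      { apply inf_glb; auto; try lra. intros u Hu. unfold h.
        apply posp_le; [|apply Hnn; lra].
        assert (phi s <= sup_on s0 u phi).
        { apply sup_ub; [|lra]. exists M. intros v Hv. apply HM. lra. }
        specialize (HP u ltac:(lra)). lra. }
      unfold Rmin; destruct Rle_dec; lra. }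
    apply Rle_trans with (g s); auto. apply sup_ub; auto. lra.
Qed.
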